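(* Fix $\omega\in(0,1)$. For a Banach space $(X,\|\cdot\|_X)$ define $f_\omega:X\to X$ by $f_\omega(x)=\|x\|_X^{\omega-1}x$ for $x\neq0$ and $f_\omega(0)=0$. Then for every $p\in(0,\infty)$ and all $x,y\in X$, $$\frac{\eta(p,\omega)\|x-y\|_X}{(\|x\|_X^{p\omega}+\|y\|_X^{p\omega})^{\frac{1-\omega}{p\omega}}}\le\|f_\omega(x)-f_\omega(y)\|_X\le2^{1-\omega}\|x-y\|_X^\omega,$$ where $\eta(p,\omega)=\inf_{\sigma\in[0,1)}\frac{1-\sigma^\omega}{1-\sigma}(1+\sigma^{p\omega})^{\frac{1-\omega}{p\omega}}$. Moreover (for $X\neq\{0\}$) neither of the constants $\eta(p,\omega)$ and $2^{1-\omega}$ in these two inequalities can be improved. *)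

(* Defs.v *)
From HB Require Import structures.
From mathcomp Require Import all_boot all_order all_algebra.
From mathcomp Require Import all_classical all_reals all_analysis.
Set Implicit Arguments. Unset Strict Implicit. Unset Printing Implicit Defensive.
Import Order.TTheory GRing.Theory Num.Theory.
Import numFieldNormedType.Exports.
Local Open Scope classical_set_scope.
Local Open Scope ring_scope.

Definition f_omega {R : realType} {X : normedModType R} (w : R) (x : X) : X :=
  if x == 0 then 0 else (`|x| `^ (w - 1)) *: x.

Definition eta_const {R : realType} (p w : R) : R :=
  inf [set ((1 - s `^ w) / (1 - s)) * (1 + s `^ (p * w)) `^ ((1 - w) / (p * w))
      | s in `[0%R, 1%R[ ].

(* Main.v *)
Require Import Defs.
From HB Require Import structures.
From mathcomp Require Import all_boot all_order all_algebra.
From mathcomp Require Import all_classical all_reals all_analysis.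
Import Order.TTheory GRing.Theory Num.Theory.
Import numFieldNormedType.Exports.
From mathcomp Require Import ring lra.
Local Open Scope classical_set_scope.
Local Open Scope ring_scope.

Section Aux.
Variable R : realType.
Implicit Types a b c r t w : R.

Lemma young r c w : 0 <= r -> 0 <= c -> 0 < w -> w < 1 ->
  r `^ w * c `^ (1 - w) <= w * r + (1 - w) * c.
Proof.
move=> r0 c0 w0 w1.
have w1' : 0 < 1 - w by rewrite subr_gt0.
have := @conjugate_powR R (r `^ w) (c `^ (1 - w)) w^-1 (1 - w)^-1
  (powR_ge0 _ _) (powR_ge0 _ _) (eqbRL (invr_gt0 _) w0) (eqbRL (invr_gt0 _) w1').
rewrite !invrK -!powRrM !mulfV ?gt_eqF // !powRr1 //.
rewrite addrC subrK => /(_ erefl).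
by rewrite [r * _]mulrC [c * _]mulrC.
Qed.

Lemma powR_anti a b w : 0 < a -> a <= b -> w < 0 -> b `^ w <= a `^ w.
Proof.
move=> a0 ab w0.
have b0 : 0 < b by exact: (lt_le_trans a0 ab).
have v0 : 0 <= - w by rewrite oppr_ge0 ltW.
have -> : w = - (- w) by rewrite opprK.
move: (-w) v0 => v v0.
rewrite !powRN lef_pV2 ?posrE ?powR_gt0 //.
by apply: ge0_ler_powR => //; rewrite nnegrE ltW.
Qed.

Lemma powR_div a b r : 0 <= a -> 0 < b -> (a / b) `^ r = a `^ r / b `^ r.
Proof.
move=> a0 b0; rewrite powRM //; last by rewrite invr_ge0 ltW.
congr (_ * _).
by rewrite -powR_inv1 ?ltW // -powRrM mulN1r powRN.
Qed.

Lemma powR_mulB1 b w : 0 <= b -> 0 < w -> b `^ (w - 1) * b = b `^ w.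
Proof. by move=> b0 w0; rewrite mulrC mulr_powRB1. Qed.

Lemma powR_inv_pair a r : 0 < a -> a `^ r * a `^ (- r) = 1.
Proof. by move=> a0; rewrite powRN mulfV // gt_eqF // powR_gt0. Qed.


Lemma inv_pair a w : 0 < a -> a `^ (w - 1) * a `^ (1 - w) = 1.
Proof. by move=> a0; rewrite -[1 - w]opprB powR_inv_pair. Qed.

Lemma two_const w : 0 < w -> w < 1 -> (2 - w) * 2 `^ (w - 1) <= 2 `^ (1 - w).
Proof.
move=> w0 w1.
have := @young 2 1 w; rewrite powR1 mulr1 => /(_ (ler0n _ 2) ler01 w0 w1) h.
have e1 : 2 `^ (w - 1) = 2 `^ w / 2.
  by rewrite powRB ?powRr1 //; apply/implyP => _; rewrite pnatr_eq0.
have e2 : 2 `^ (1 - w) = (2 `^ (w - 1))^-1.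
  by rewrite -powRN opprB.
rewrite e2 e1.
have p0 : 0 < 2 `^ w :> R by rewrite powR_gt0.
set v := 2 `^ w in h p0 *.
rewrite invf_div ler_pdivlMr ?divr_gt0 //.
have hv : v * v <= (1 + w) * (1 + w) by nra.
have : (2 - w) * (v * v) <= (2 - w) * ((1 + w) * (1 + w)) by rewrite ler_wpM2l // subr_ge0 ltW // (lt_trans w1) // ltr1n.
rewrite (_ : (2 - w) * (v / 2) * v = (2 - w) * (v * v) / 2); last by field.
rewrite ler_pdivrMr //.
have : 0 <= (1 - w) * (1 - w) * (2 + w).
  by apply: mulr_ge0; [rewrite -expr2 sqr_ge0 | lra].
nra.
Qed.

Lemma half_id t w : 0 < t -> (t / 2) `^ (w - 1) * t = 2 `^ (1 - w) * t `^ w.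
Proof.
move=> t0; rewrite powR_div ?ltW //.
have e2 : (2 `^ (w - 1))^-1 = 2 `^ (1 - w) :> R by rewrite -powRN opprB.
rewrite mulrAC e2 mulrC; congr (_ * _).
rewrite -{2}(powRr1 (ltW t0)) -powRD ?subrK //.
by apply/implyP => _; rewrite gt_eqF.
Qed.

Lemma powR_mulB1' t w : 0 < t -> t `^ (w - 1) * t = t `^ w.
Proof.
move=> t0; rewrite -{2}(powRr1 (ltW t0)) -powRD ?subrK //.
by apply/implyP => _; rewrite gt_eqF.
Qed.

Lemma ub_real a b t w : 0 < w -> w < 1 -> 0 < t -> 0 <= b -> b <= a ->
  a - b <= t -> t <= a + b ->
  a `^ (w - 1) * (t - b) + b `^ w <= 2 `^ (1 - w) * t `^ w.
Proof.
move=> w0 w1 t0 b0 ba h1 h2.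
have wn : w - 1 < 0 by rewrite subr_lt0.
have w1' : 0 < 1 - w by rewrite subr_gt0.
rewrite -half_id //.
have [c1|c1] := leP (2 * b) t.
  have tb0 : 0 < t - b by lra.
  have ha : a `^ (w - 1) <= (t - b) `^ (w - 1) by apply: powR_anti => //; lra.
  apply: (@le_trans _ _ ((t - b) `^ w + b `^ w)).
    rewrite lerD2r -(powR_mulB1' _ w tb0) ler_wpM2r //; lra.
  have y1 := @young (t - b) (t / 2) w (ltW tb0) (ltac:(lra)) w0 w1.
  have y2 := @young b (t / 2) w b0 (ltac:(lra)) w0 w1.
  move: y1 y2.
  have := inv_pair _ w (ltac:(lra) : 0 < t / 2).
  have := @powR_gt0 _ (t / 2) (w - 1) (ltac:(lra)).
  have := @powR_gt0 _ (t / 2) (1 - w) (ltac:(lra)).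
  set P := (t / 2) `^ (1 - w); set Q := (t / 2) `^ (w - 1).
  set U := (t - b) `^ w; set V := b `^ w => P0 Q0 PQ y1 y2.
  have hs : (U + V) * P <= t by rewrite mulrDl; lra.
  have := ler_wpM2r (ltW Q0) hs.
  rewrite -mulrA [P * Q]mulrC PQ mulr1 mulrC //.
have [c2|c2] := leP b t.
  have bpos : 0 < b by lra.
  have ha : a `^ (w - 1) <= b `^ (w - 1) by apply: powR_anti => //; lra.
  apply: (@le_trans _ _ (b `^ (w - 1) * t)).
    have e : b `^ (w - 1) * t = b `^ (w - 1) * (t - b) + b `^ w.
      by rewrite -(powR_mulB1' _ w bpos) -mulrDr subrK.
    rewrite e lerD2r ler_wpM2r //; lra.
  apply: ler_wpM2r; first exact: ltW.
  apply: powR_anti => //; lra.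
have bt : 0 < b + t by lra.
have ha : (b + t) `^ (w - 1) <= a `^ (w - 1) by apply: powR_anti => //; lra.
have h3 : a `^ (w - 1) * (t - b) <= (b + t) `^ (w - 1) * (t - b).
  by rewrite ler_wnM2r //; lra.
have y := @young b (b + t) w b0 (ltW bt) w0 w1.
move: y ha h3.
have := inv_pair _ w bt.
have := @powR_gt0 _ (b + t) (w - 1) bt.
have := @powR_gt0 _ (b + t) (1 - w) bt.
have hM : (b + t) `^ (w - 1) <= (2 * t) `^ (w - 1) by apply: powR_anti => //; lra.
rewrite powRM in hM; [|exact: ler0n|exact: ltW].
have e1 : (t / 2) `^ (w - 1) * t = 2 `^ (1 - w) * t `^ w by rewrite half_id.
have e2 : 2 `^ (w - 1) * t `^ (w - 1) * t = 2 `^ (w - 1) * t `^ w.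
  by rewrite -mulrA powR_mulB1'.
have tc := two_const w w0 w1.
have := @powR_ge0 _ t w.
have := @powR_ge0 _ 2 (w - 1).
rewrite e1.
move: hM e2 tc.
set P := (b + t) `^ (1 - w); set M := (b + t) `^ (w - 1).
set V := b `^ w; set A := a `^ (w - 1); set T := t `^ w.
set K := 2 `^ (w - 1); set L := t `^ (w - 1); set J := 2 `^ (1 - w).
move=> hM e2 tc K0 T0 P0 M0 MP y ha h3.
have hV : V <= (w * b + (1 - w) * (b + t)) * M.
  have := ler_wpM2r (ltW M0) y; rewrite -mulrA [P * M]mulrC MP mulr1 //.
have hsum : A * (t - b) + V <= (2 - w) * t * M by nra.
have hM2 : (2 - w) * t * M <= (2 - w) * t * (K * L).
  by rewrite ler_wpM2l // mulr_ge0 //; lra.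
have : (2 - w) * t * (K * L) = (2 - w) * K * T.
  transitivity ((2 - w) * (K * L * t)); first ring.
  by rewrite e2; ring.
nra.
Qed.

Lemma pw_split (x : R) w : 0 <= x -> 0 < w -> w < 1 -> x `^ (1 - w) * x `^ w = x.
Proof.
move=> x0 w0 w1; have [->|xn] := eqVneq x 0.
  by rewrite powR0 ?mul0r // subr_eq0 eq_sym lt_eqF.
by rewrite -powRD ?subrK ?powRr1 //; apply/implyP.
Qed.

Lemma pe_id (x p : R) w : 0 < p -> 0 < w -> (x `^ (p * w)) `^ ((1 - w) / (p * w)) = x `^ (1 - w).
Proof.
move=> p0 w0; rewrite -powRrM mulrC divfK // mulf_neq0 // gt_eqF //.
Qed.

Definition Kf p w s : R := (1 - s `^ w) / (1 - s) * (1 + s `^ (p * w)) `^ ((1 - w) / (p * w)).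

Lemma lb_real a b t (D : R) w (p eta : R) : 0 < w -> w < 1 -> 0 < p -> 0 < a -> 0 <= b -> b <= a ->
  0 <= t -> 0 <= D -> a `^ w - b `^ w <= D ->
  t <= a `^ (1 - w) * D + (a `^ (1 - w) - b `^ (1 - w)) * b `^ w ->
  0 <= eta -> eta <= 1 -> (b < a -> eta <= Kf p w (b / a)) ->
  eta * t <= D * (a `^ (p * w) + b `^ (p * w)) `^ ((1 - w) / (p * w)).
Proof.
move=> w0 w1 p0 a0 b0 ba t0 D0 hD ht e0 e1 hK.
have pw0 : 0 < p * w by rewrite mulr_gt0.
have e0' : 0 <= (1 - w) / (p * w) by apply: divr_ge0; [rewrite subr_ge0 ltW | exact: ltW].
have a1w0 : 0 < a `^ (1 - w) by rewrite powR_gt0.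
have [eab|lab] := eqVneq b a.
  rewrite eab subrr mul0r addr0 in ht.
  rewrite eab -mulr2n -mulr_natl powRM ?ler0n ?powR_ge0 // pe_id //.
  have h2 : 1 <= 2 `^ ((1 - w) / (p * w)) :> R.
    have := @ler_powR R 2 (ler1n _ 2) _ _ e0'; by rewrite powRr0.
  have : t <= a `^ (1 - w) * D * 2 `^ ((1 - w) / (p * w)).
    apply: (le_trans ht); rewrite ler_peMr // mulr_ge0 // ltW //.
  move=> h; apply: (le_trans (ler_piMl t0 e1)); apply: (le_trans h).
  by rewrite le_eqVlt; apply/orP; left; apply/eqP; ring.
have lab' : b < a by rewrite lt_neqAle lab ba.
have := hK lab'; rewrite /Kf.
have A0 : 0 < a `^ w by rewrite powR_gt0.
have a0' := ltW a0.
have AB : b `^ w < a `^ w by apply: gt0_ltr_powR; rewrite ?nnegrE.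
have ab1 : b `^ (1 - w) <= a `^ (1 - w).
  by apply: ge0_ler_powR; rewrite ?nnegrE // subr_ge0 ltW.
have hA := pw_split a w a0' w0 w1.
have hB := pw_split b w b0 w0 w1.
rewrite !powR_div //.
have Apw : 0 < a `^ (p * w) by rewrite powR_gt0.
have -> : a `^ (p * w) + b `^ (p * w) = a `^ (p * w) * (1 + b `^ (p * w) / a `^ (p * w)).
  by rewrite mulrDr mulr1 mulrCA divff ?mulr1 // gt_eqF.
rewrite powRM ?powR_ge0 //; last by rewrite addr_ge0 // divr_ge0 // powR_ge0.
rewrite pe_id //.
have Q0 : 0 <= (1 + b `^ (p * w) / a `^ (p * w)) `^ ((1 - w) / (p * w)) by apply: powR_ge0.
move: Q0 hA hB ab1 AB A0 a1w0 ht hD.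
set Q := (1 + _) `^ _; set A := a `^ w; set B := b `^ w; set a1 := a `^ (1 - w);
set b1 := b `^ (1 - w) => Q0 hA hB ab1 AB A0 a1w0 ht hD hK'.
have key : t * (A - B) <= D * (a - b).
  have s1 : t * (A - B) <= (a1 * D + (a1 - b1) * B) * (A - B).
    by rewrite ler_wpM2r // subr_ge0 ltW.
  have s2 : (a1 - b1) * B * (A - B) <= (a1 - b1) * B * D.
    by rewrite ler_wpM2l // mulr_ge0 // ?subr_ge0 // powR_ge0.
  have e : a1 * D * (A - B) + (a1 - b1) * B * D = D * (a - b).
    by rewrite -hA -hB; ring.
  apply: (le_trans s1); rewrite mulrDl -e lerD2l; exact: s2.
have Keq : (1 - B / A) / (1 - b / a) = (A - B) * a / (A * (a - b)).
  field; rewrite ?subr_eq0 ?gt_eqF // ?lt_eqF //.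
rewrite Keq in hK'.
have ab0 : 0 < a - b by rewrite subr_gt0.
have C0 : 0 <= Q * a / (A * (a - b)).
  by rewrite divr_ge0 ?mulr_ge0 // ltW // mulr_gt0.
apply: (le_trans (ler_wpM2r t0 hK')).
have -> : (A - B) * a / (A * (a - b)) * Q * t = (Q * a / (A * (a - b))) * (t * (A - B)).
  by ring.
apply: (le_trans (ler_wpM2l C0 key)).
rewrite -{1}hA; rewrite le_eqVlt; apply/orP; left; apply/eqP.
field; rewrite ?subr_eq0 ?gt_eqF //.
Qed.

Lemma Kf_ge0 (p : R) w (s : R) : 0 < p -> 0 < w -> 0 <= s -> s < 1 -> 0 <= Kf p w s.
Proof.
move=> p0 w0 s0 s1; rewrite /Kf mulr_ge0 ?powR_ge0 // divr_ge0 //; last by rewrite subr_ge0 ltW.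
rewrite subr_ge0; apply: (@le_trans _ _ (1 `^ w)); last by rewrite powR1.
by apply: ge0_ler_powR; rewrite ?nnegrE // ltW.
Qed.

Lemma Kf0 (p : R) w : 0 < p -> 0 < w -> Kf p w 0 = 1.
Proof.
move=> p0 w0; rewrite /Kf !powR0 ?gt_eqF ?mulr_gt0 //.
by rewrite !subr0 addr0 powR1 divr1 mulr1.
Qed.

Lemma eta_facts (p : R) w : 0 < p -> 0 < w ->
  [/\ 0 <= eta_const p w, eta_const p w <= 1,
      (forall s, 0 <= s -> s < 1 -> eta_const p w <= Kf p w s) &
      (forall c, eta_const p w < c -> exists2 s, 0 <= s < 1 & Kf p w s < c)].
Proof.
move=> p0 w0.
have mem s : 0 <= s -> s < 1 ->
  [set ((1 - s `^ w) / (1 - s)) * (1 + s `^ (p * w)) `^ ((1 - w) / (p * w))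
      | s in `[0%R, 1%R[ ] (Kf p w s).
  by move=> s0 s1; exists s => //=; rewrite in_itv /= s0 s1.
have ne : [set ((1 - s `^ w) / (1 - s)) * (1 + s `^ (p * w)) `^ ((1 - w) / (p * w))
      | s in `[0%R, 1%R[ ] !=set0 by exists (Kf p w 0); apply: mem.
have lb : lbound [set ((1 - s `^ w) / (1 - s)) * (1 + s `^ (p * w)) `^ ((1 - w) / (p * w))
      | s in `[0%R, 1%R[ ] 0.
  move=> _ [s + <-]; rewrite /= in_itv /= => /andP[s0 s1].
  exact: (Kf_ge0 p w s p0 w0 s0 s1).
have hl : has_lbound [set ((1 - s `^ w) / (1 - s)) * (1 + s `^ (p * w)) `^ ((1 - w) / (p * w))
      | s in `[0%R, 1%R[ ] by exists 0.
have gK s : 0 <= s -> s < 1 -> eta_const p w <= Kf p w s.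
  by move=> s0 s1; apply: ge_inf => //; apply: mem.
split => //.
- by apply: lb_le_inf.
- by rewrite -(Kf0 p w p0 w0); apply: gK.
move=> c hc.
have [e [s + <-] he] := inf_adherent (ltac:(rewrite subr_gt0; exact hc) : 0 < c - eta_const p w) (conj ne hl).
rewrite /= in_itv /= => hs; exists s => //.
by move: he; rewrite /eta_const subrKC.
Qed.

End Aux.

Section Vec.
Variables (R : realType) (X : normedModType R).

Lemma fE (w : R) (x : X) : f_omega w x = `|x| `^ (w - 1) *: x.
Proof. by rewrite /f_omega; case: eqP => [->|//]; rewrite scaler0. Qed.

Lemma norm_f (w : R) (x : X) : 0 < w -> `|f_omega w x| = `|x| `^ w.
Proof.
move=> w0; rewrite fE normrZ ger0_norm ?powR_ge0 //.
by rewrite powR_mulB1.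
Qed.

Lemma ub_vec (w : R) (x y : X) : 0 < w -> w < 1 -> `|y| <= `|x| ->
  `|f_omega w x - f_omega w y| <= 2 `^ (1 - w) * `|x - y| `^ w.
Proof.
move=> w0 w1 yx.
have [->|xy] := eqVneq x y.
  by rewrite !subrr normr0 mulr_ge0 ?powR_ge0.
have t0 : 0 < `|x - y| by rewrite normr_gt0 subr_eq0.
set a := `|x|; set b := `|y|.
have e : f_omega w x - f_omega w y =
    a `^ (w - 1) *: (x - y) + (a `^ (w - 1) - b `^ (w - 1)) *: y.
  by rewrite !fE scalerBr scalerBl addrA subrK.
have hb : `|a `^ (w - 1) - b `^ (w - 1)| * b <= b `^ w - a `^ (w - 1) * b.
  have [b0|b0] := eqVneq b 0.
    by rewrite b0 !mulr0 powR0 ?gt_eqF // subr0.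
  have bpos : 0 < b by rewrite lt0r b0 normr_ge0.
  have h : a `^ (w - 1) <= b `^ (w - 1) by apply: powR_anti => //; rewrite subr_lt0.
  rewrite ler0_norm ?subr_le0 // opprB mulrBl powR_mulB1 //.
  exact: ltW.
have := @ub_real R a b _ w w0 w1 t0 (normr_ge0 y) yx (lerB_dist x y) (ler_normB x y).
move=> H; apply: (le_trans _ H).
rewrite e; apply: (le_trans (ler_normD _ _)).
rewrite !normrZ (ger0_norm (powR_ge0 _ _)) -/b mulrBr.
lra.
Qed.

Lemma lb_vec (w p : R) (x y : X) : 0 < w -> w < 1 -> 0 < p -> `|y| <= `|x| ->
  eta_const p w * `|x - y| / (`|x| `^ (p * w) + `|y| `^ (p * w)) `^ ((1 - w) / (p * w))
    <= `|f_omega w x - f_omega w y|.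
Proof.
move=> w0 w1 p0 yx.
have [eta0 eta1 etaK _] := eta_facts R p w p0 w0.
have [x0|xn0] := eqVneq x 0.
  have y0 : y = 0 by apply/eqP; rewrite -normr_le0 -(normr0 X) -x0.
  by rewrite x0 y0 subrr normr0 mulr0 mul0r.
have a0 : 0 < `|x| by rewrite normr_gt0.
have pw0 : 0 < p * w by rewrite mulr_gt0.
have S0 : 0 < (`|x| `^ (p * w) + `|y| `^ (p * w)) `^ ((1 - w) / (p * w)).
  by rewrite powR_gt0 // ltr_pwDl ?powR_ge0 // powR_gt0.
rewrite ler_pdivrMr //.
set a := `|x|; set b := `|y|.
set u := f_omega w x; set v := f_omega w y.
have hx : x = a `^ (1 - w) *: u.
  by rewrite /u fE scalerA mulrC inv_pair ?scale1r.
have hy : y = b `^ (1 - w) *: v.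
  have [y0|yn0] := eqVneq y 0.
    by rewrite /v y0 /f_omega eqxx scaler0.
  have b0 : 0 < b by rewrite normr_gt0.
  by rewrite /v fE scalerA mulrC inv_pair ?scale1r.
have hxy : x - y = a `^ (1 - w) *: (u - v) + (a `^ (1 - w) - b `^ (1 - w)) *: v.
  by rewrite {1}hx {1}hy scalerBr scalerBl addrA subrK.
have ab1 : b `^ (1 - w) <= a `^ (1 - w).
  by apply: ge0_ler_powR; rewrite ?nnegrE ?normr_ge0 // subr_ge0 ltW.
have ht : `|x - y| <= a `^ (1 - w) * `|u - v| + (a `^ (1 - w) - b `^ (1 - w)) * b `^ w.
  rewrite hxy; apply: (le_trans (ler_normD _ _)).
  rewrite !normrZ (ger0_norm (powR_ge0 _ _)) (ger0_norm (_ : 0 <= _ - _)); last by rewrite subr_ge0.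
  by rewrite /v norm_f.
have hD : a `^ w - b `^ w <= `|u - v|.
  by rewrite -(norm_f w x w0) -(norm_f w y w0) lerB_dist.
apply: (@lb_real R a b _ _ w p _ w0 w1 p0 a0 (normr_ge0 y) yx (normr_ge0 _) (normr_ge0 _) hD ht eta0 eta1).
move=> ba; apply: etaK; first exact: (divr_ge0 (normr_ge0 _) (ltW a0)).
by rewrite ltr_pdivrMr // mul1r.
Qed.

Lemma unit_vec (w : R) (z : X) : 0 < w -> z != 0 ->
  `|(`|z|)^-1 *: z| = 1 /\ f_omega w ((`|z|)^-1 *: z) = (`|z|)^-1 *: z.
Proof.
move=> w0 zn0.
have zpos : 0 < `|z| by rewrite normr_gt0.
have nu : `|(`|z|)^-1 *: z| = 1.
  by rewrite normrZ ger0_norm ?invr_ge0 ?normr_ge0 // mulVf // gt_eqF.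
by split => //; rewrite fE nu powR1 scale1r.
Qed.

Lemma tight1 (w p c : R) (z : X) : 0 < w -> w < 1 -> 0 < p -> z != 0 ->
  eta_const p w < c ->
  exists x y : X,
    `|f_omega w x - f_omega w y|
      < c * `|x - y| / (`|x| `^ (p * w) + `|y| `^ (p * w)) `^ ((1 - w) / (p * w)).
Proof.
move=> hw0 hw1 p0 zn0 hc.
have [nu fu] := unit_vec w z hw0 zn0.
move: ((`|z|)^-1 *: z) nu fu => u nu fu.
have [_ _ _ adh] := eta_facts R p w p0 hw0.
have [s /andP[s0 s1] hs] := adh c hc.
exists u, (s *: u).
have fs : f_omega w (s *: u) = s `^ w *: u.
  by rewrite fE normrZ nu mulr1 ger0_norm // scalerA powR_mulB1.
rewrite fu fs -{1}(scale1r u) -scalerBl -{2}(scale1r u) -scalerBl.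
rewrite !normrZ nu !mulr1 (ger0_norm s0) powR1 /=.
have sw1 : s `^ w <= 1.
  apply: (@le_trans _ _ (1 `^ w)); last by rewrite powR1.
  by apply: ge0_ler_powR; rewrite ?nnegrE // ltW.
have s1' : 0 < 1 - s by rewrite subr_gt0.
rewrite !ger0_norm ?subr_ge0 //; last exact: ltW.
have Q0 : 0 < (1 + s `^ (p * w)) `^ ((1 - w) / (p * w)).
  by rewrite powR_gt0 // ltr_pwDl ?powR_ge0.
rewrite ltr_pdivlMr //.
move: hs; rewrite /Kf mulrAC ltr_pdivrMr //.
Qed.

Lemma tight2 (w c : R) (z : X) : 0 < w -> w < 1 -> z != 0 ->
  c < 2 `^ (1 - w) ->
  exists x y : X, c * `|x - y| `^ w < `|f_omega w x - f_omega w y|.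
Proof.
move=> hw0 hw1 zn0 hc.
have [nu fu] := unit_vec w z hw0 zn0.
move: ((`|z|)^-1 *: z) nu fu => u nu fu.
exists u, (- u).
have fnu : f_omega w (- u) = - u by rewrite fE normrN nu powR1 scale1r.
rewrite fu fnu opprK -mulr2n -scaler_nat normrZ nu mulr1 ger0_norm ?ler0n //.
have p2 : 0 < 2 `^ w :> R by rewrite powR_gt0.
apply: (@lt_le_trans _ _ (2 `^ (1 - w) * 2 `^ w)); first by rewrite ltr_pM2r.
by rewrite -powRD ?subrK ?powRr1 ?ler0n //; apply/implyP.
Qed.

End Vec.

Theorem lemma5p12 (R : realType) (X : completeNormedModType R) (w : R)
  (hw0 : 0 < w) (hw1 : w < 1) :
  (forall (p : R), 0 < p -> forall x y : X,
      eta_const p w * `|x - y| / (`|x| `^ (p * w) + `|y| `^ (p * w)) `^ ((1 - w) / (p * w))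
        <= `|f_omega w x - f_omega w y|
      /\ `|f_omega w x - f_omega w y| <= 2 `^ (1 - w) * `|x - y| `^ w)
  /\
  ((exists z : X, z != 0) ->
     (forall (p : R), 0 < p -> forall c : R, eta_const p w < c ->
        exists x y : X,
          `|f_omega w x - f_omega w y|
            < c * `|x - y| / (`|x| `^ (p * w) + `|y| `^ (p * w)) `^ ((1 - w) / (p * w)))
     /\
     (forall c : R, c < 2 `^ (1 - w) ->
        exists x y : X, c * `|x - y| `^ w < `|f_omega w x - f_omega w y|)).
Proof.
split.
  move=> p p0 x y.
  have [yx|xy] := leP `|y| `|x|.
    by split; [exact: lb_vec | exact: ub_vec].
  rewrite (distrC x y) (distrC (f_omega w x)) (addrC (`|x| `^ (p * w))).
  by split; [apply: lb_vec | apply: ub_vec] => //; exact: ltW.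
move=> [z zn0]; split.
  by move=> p p0 c hc; exact: (@tight1 R X w p c z hw0 hw1 p0 zn0 hc).
by move=> c hc; exact: (@tight2 R X w c z hw0 hw1 zn0 hc).
Qed.
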